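(* Let $G$ be connected with weights $w:E\to\mathbb{R}_{>0}$ such that for every pair of vertices $a,b$ there is exactly one shortest $a$–$b$ path in $(G,w)$. Let $\pi$ be a vertex order, let $m_C$ be the output of the basic customization applied to $m_0$, and let $m_P$ be the perfect metric. Let $R$ be the set of edges $\{x,y\}$ of $G_\pi^*$ with $m_P(\{x,y\})\neq m_C(\{x,y\})$. Then (i) for all $s,t\in V$ there is an up-down $s$–$t$ path in $G_\pi^*$ that uses no edge of $R$ and whose $m_C$-length equals $\mathrm{dist}_I(s,t)$; and (ii) for every edge $\{x,y\}\notin R$ of $G_\pi^*$, the one-edge path $x,y$ is the only up-down $x$–$y$ path in $G_\pi^*$ whose $m_C$-length equals $\mathrm{dist}_I(x,y)$.
   Context: Let $G=(V,E)$ be a finite simple undirected graph with $n=|V|$ vertices. A vertex order is a bijection $\pi:\{1,\dots,n\}\to V$; the rank of $v$ is $\pi^{-1}(v)$. Contracting a vertex $v$ in a graph means deleting $v$ and its incident edges and adding an edge between every pair of former neighbors of $v$ that are not already adjacent. The core graph $G_{\pi,i}$ is obtained from $G$ by contracting $\pi(1),\dots,\pi(i-1)$ in this order. $G_\pi^*$ is the graph on $V$ whose edge set is the union of the edge sets of all $G_{\pi,i}$, $i=1,\dots,n$ (i.e. $G$ together with all edges inserted during the contractions). Let $w:E\to\mathbb{R}_{>0}$ and let $\mathrm{dist}_I(s,t)$ be the shortest $s$–$t$ path length in $(G,w)$. A metric is a map $m$ assigning to every edge of $G_\pi^*$ a value in $\mathbb{R}_{>0}\cup\{\infty\}$; the $m$-length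 of a path in $G_\pi^*$ is the sum of $m$ over its edges. An up-down path is a path $v_0,\dots,v_k$ in $G_\pi^*$ for which there is $j$ with the ranks strictly increasing along $v_0,\dots,v_j$ and strictly decreasing along $v_j,\dots,v_k$. The perfect metric is $m_P(\{x,y\})=\mathrm{dist}_I(x,y)$ for every edge $\{x,y\}$ of $G_\pi^*$. The initial metric $m_0$ is $m_0(\{x,y\})=w(\{x,y\})$ if $\{x,y\}\in E$ and $\infty$ otherwise. The basic customization starts from $m:=m_0$ and processes the edges $\{x,y\}$ of $G_\pi^*$ in nondecreasing order of the rank of the lower-ranked endpoint (ties arbitrary); when processing $\{x,y\}$ it sets, for every vertex $z$ of rank smaller than both $x$ and $y$ that is adjacent to both in $G_\pi^*$, $m(\{x,y\}):=\min\{m(\{x,y\}),m(\{x,z\})+m(\{z,y\})\}$ using the current values. Its output is the final metric $m_C$. *)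

(* Defs.v *)
From HB Require Import structures.
From mathcomp Require Import all_boot all_order all_algebra.
Set Implicit Arguments. Unset Strict Implicit. Unset Printing Implicit Defensive.
Import Order.TTheory GRing.Theory Num.Theory.
Local Open Scope ring_scope.

Section Defs.
Variable T : finType.

Definition simple_graph (e : rel T) : Prop :=
  (forall x y, e x y = e y x) /\ (forall x, ~~ e x x).

Definition connected (e : rel T) : Prop := forall a b, connect e a b.

(* A vertex order pi : {1..n} -> V, here 0-based: 'I_#|T| -> T, bijective. *)
Definition pi_seq (pi : 'I_#|T| -> T) : seq T := [seq pi i | i <- enum 'I_#|T|].
Definition rank (pi : 'I_#|T| -> T) (v : T) : nat := index v (pi_seq pi).

Definition contract (g : rel T) (v : T) : rel T :=
  fun a b => [&& a != v, b != v & g a b || [&& a != b, g a v & g v b]].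

(* Core graph G_{pi,k+1}: contract pi(1),...,pi(k) (1-based) in order. *)
Definition core_graph (e : rel T) (pi : 'I_#|T| -> T) (k : nat) : rel T :=
  foldl contract e (take k (pi_seq pi)).

Definition Gstar (e : rel T) (pi : 'I_#|T| -> T) : rel T :=
  fun x y => [exists k : 'I_#|T|, core_graph e pi k x y].

Variable R : realFieldType.

Definition wlen (w : T -> T -> R) (s : T) (p : seq T) : R :=
  \sum_(d <- pairmap w s p) d.

Definition is_dist (e : rel T) (w : T -> T -> R) (s t : T) (d : R) : Prop :=
  (exists p, [/\ path e s p, last s p = t & wlen w s p = d]) /\
  (forall p, path e s p -> last s p = t -> d <= wlen w s p).

(* Extended values R_{>0} U {oo}: None stands for infinity. *)
Definition oadd (a b : option R) : option R :=
  match a, b with Some x, Some y => Some (x + y) | _, _ => None end.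
Definition omin (a b : option R) : option R :=
  match a, b with
  | None, _ => b
  | _, None => a
  | Some x, Some y => Some (Num.min x y)
  end.

(* m-length of the path s :: p in G_pi^* (metric given on ordered pairs,
   used symmetrically). *)
Definition mlen (m : T -> T -> option R) (s : T) (p : seq T) : option R :=
  foldr oadd (Some 0) (pairmap m s p).

Definition m0 (e : rel T) (w : T -> T -> R) : T -> T -> option R :=
  fun x y => if e x y then Some (w x y) else None.

Definition mP (dist : T -> T -> R) : T -> T -> option R :=
  fun x y => Some (dist x y).

Definition process_edge (e : rel T) (pi : 'I_#|T| -> T)
    (m : T -> T -> option R) (xy : T * T) : T -> T -> option R :=
  let: (x, y) := xy in
  let v := foldr omin (m x y)
      [seq oadd (m x z) (m z y) |
        z <- enum T & [&& (rank pi z < rank pi x)%N, (rank pi z < rank pi y)%N,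
                         Gstar e pi x z & Gstar e pi z y]] in
  fun a b => if ((a == x) && (b == y)) || ((a == y) && (b == x)) then v else m a b.

Definition low_rank (pi : 'I_#|T| -> T) (xy : T * T) : nat :=
  minn (rank pi xy.1) (rank pi xy.2).

(* A valid processing order: lists every edge of G_pi^* exactly once (as an
   ordered pair in one of its two orientations), nondecreasing in the rank of
   the lower-ranked endpoint; ties arbitrary. *)
Definition valid_edge_order (e : rel T) (pi : 'I_#|T| -> T) (ord : seq (T * T))
  : Prop :=
  [/\ all (fun xy => Gstar e pi xy.1 xy.2) ord,
      (forall x y, Gstar e pi x y ->
         count (fun uv => (uv == (x, y)) || (uv == (y, x))) ord = 1%N) &
      sorted (fun p q => low_rank pi p <= low_rank pi q)%N ord].

Definition customize (e : rel T) (w : T -> T -> R) (pi : 'I_#|T| -> T)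
    (ord : seq (T * T)) : T -> T -> option R :=
  foldl (process_edge e pi) (m0 e w) ord.

Definition up_down (e : rel T) (pi : 'I_#|T| -> T) (s : T) (p : seq T) : Prop :=
  [/\ path (Gstar e pi) s p, uniq (s :: p) &
      exists j, sorted (fun a b => rank pi a < rank pi b)%N (take j.+1 (s :: p))
             /\ sorted (fun a b => rank pi a > rank pi b)%N (drop j (s :: p))].

End Defs.

(* Main.v *)
Require Import Defs.
From HB Require Import structures.
From mathcomp Require Import all_boot all_order all_algebra zify.
Import Order.TTheory GRing.Theory Num.Theory.
Local Open Scope ring_scope.

Section Walks.
Variables (T : finType) (R : realFieldType) (e : rel T) (w : T -> T -> R).

Lemma wlen_nil x : wlen w x [::] = 0.
Proof. by rewrite /wlen big_nil. Qed.
Lemma wlen_cons x y p : wlen w x (y :: p) = w x y + wlen w y p.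
Proof. by rewrite /wlen /= big_cons. Qed.
Lemma wlen_cat x p1 p2 : wlen w x (p1 ++ p2) = wlen w x p1 + wlen w (last x p1) p2.
Proof. by rewrite /wlen pairmap_cat big_cat. Qed.

Hypothesis wpos : forall {x y}, e x y -> 0 < w x y.

Lemma wlen_ge0 x p : path e x p -> 0 <= wlen w x p.
Proof.
elim: p x => [|y p IH] x /=; first by rewrite wlen_nil.
case/andP=> exy pp; rewrite wlen_cons addr_ge0 ?IH //.
exact: ltW (wpos exy).
Qed.

Lemma nonuniq_shorter p x : path e x p -> ~~ uniq (x :: p) ->
  exists q, [/\ path e x q, last x q = last x p & wlen w x q < wlen w x p].
Proof.
elim: p x => [|y p IH] x // pp.
case xin: (x \in y :: p) => /=.
  rewrite -[last y p]/(last x (y :: p)); case/splitPr: xin pp => p1 p2 pp.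
  exists p2; split.
  - by move: pp; rewrite cat_path /= => /and3P[_ _ ->].
  - by rewrite last_cat.
  - rewrite wlen_cat wlen_cons.
    have := pp; rewrite cat_path /= => /and3P[pp1 el pp2].
    rewrite addrA -[X in X < _]add0r ltrD2r.
    rewrite ltr_wpDl ?wpos //; by apply: wlen_ge0.
move: pp => /andP[exy pp] nu; have nu2 : ~~ uniq (y :: p) by move: nu; rewrite xin.
have [q [pq lq wq]] := IH y pp nu2.
exists (y :: q); split => //=; first by rewrite exy.
by rewrite !wlen_cons ltrD2l.
Qed.

End Walks.

Section Ranks.
Variables (T : finType) (pi : 'I_#|T| -> T).
Hypothesis pib : bijective pi.

Lemma size_s : size (pi_seq pi) = #|T|.
Proof. by rewrite /pi_seq size_map size_enum_ord. Qed.

Lemma mem_s z : z \in pi_seq pi.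
Proof.
case: pib => g _ gK; rewrite -(gK z) /pi_seq; apply: map_f; exact: mem_enum.
Qed.

Lemma uniq_s : uniq (pi_seq pi).
Proof.
rewrite /pi_seq map_inj_uniq ?enum_uniq //; exact: bij_inj.
Qed.

Lemma rank_lt z : (rank pi z < #|T|)%N.
Proof. by rewrite /rank -size_s index_mem mem_s. Qed.

Lemma rank_inj a b : rank pi a = rank pi b -> a = b.
Proof.
move=> h; have := nth_index a (mem_s a); have := nth_index a (mem_s b).
by rewrite -/(rank pi a) -/(rank pi b) h => -> ->.
Qed.

Lemma rank_neq a b : a != b -> rank pi a != rank pi b.
Proof. by apply: contraNneq => /rank_inj ->. Qed.

Lemma in_C k z : (z \in take k (pi_seq pi)) = (rank pi z < k)%N.
Proof. by rewrite in_take // mem_s. Qed.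

Variable e : rel T.
Hypothesis esym : forall x y, e x y = e y x.
Hypothesis eirr : forall x, ~~ e x x.

Lemma fold_contract_sym (l : seq T) (g : rel T) : (forall x y, g x y = g y x) ->
  forall x y, foldl (@contract T) g l x y = foldl (@contract T) g l y x.
Proof.
elim: l g => [|v l IH] g gs //=; apply: IH => x y.
rewrite /contract gs [g x v]gs [g v y]gs [x == y]eq_sym.
by case: (x != v); case: (y != v); rewrite //= (andbC (g v x)).
Qed.

Lemma fold_contract_irr (l : seq T) (g : rel T) : (forall x, ~~ g x x) ->
  forall x, ~~ foldl (@contract T) g l x x.
Proof.
elim: l g => [|v l IH] g gi //=; apply: IH => x.
by rewrite /contract eqxx (negbTE (gi x)) /= !andbF.
Qed.

Lemma Gstar_sym x y : Gstar e pi x y = Gstar e pi y x.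
Proof.
rewrite /Gstar; apply/existsP/existsP => -[k hk]; exists k;
  by rewrite /core_graph fold_contract_sym.
Qed.

Lemma Gstar_neq x y : Gstar e pi x y -> x != y.
Proof.
case/existsP => k; apply: contraTneq => ->.
by rewrite /core_graph fold_contract_irr.
Qed.

Lemma core_path k : (k <= #|T|)%N -> forall a b q,
  (rank pi a >= k)%N -> (rank pi b >= k)%N -> a != b -> path e a q -> last a q = b ->
  (forall z, z \in q -> z != b -> (rank pi z < k)%N) -> core_graph e pi k a b.
Proof.
elim: k => [|k IH] hk a b q ha hb ab pq lq hq.
  case: q pq lq hq => [|c q] /=; first by move=> _ /eqP; rewrite (negbTE ab).
  move=> /andP[eac _] _ hq.
  have cb : c = b by case: (c =P b) => // /eqP cb; have := hq c (mem_head _ _) cb.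
  by rewrite /core_graph take0 /= -cb.
have ks : (k < size (pi_seq pi))%N by rewrite size_s.
rewrite /core_graph (take_nth a ks) foldl_rcons -/(core_graph e pi k).
set v := nth a (pi_seq pi) k.
have rv : rank pi v = k by rewrite /rank /v index_uniq // uniq_s.
have av : a != v by apply: contraTneq ha => ->; rewrite rv ltnn.
have bv : b != v by apply: contraTneq hb => ->; rewrite rv ltnn.
have hk' : (k <= #|T|)%N by apply: ltnW.
case: (shortenP pq) lq hq => q' pq' uq' sub lq hq.
have hq' : forall z, z \in q' -> z != b -> (rank pi z < k.+1)%N.
  by move=> z zq zb; apply: hq => //; apply: sub.
rewrite /contract av bv /=.
case vq: (v \in q'); last first.
  apply/orP; left; apply: (IH hk' a b q') => //; try apply: ltnW => //.
  move=> z zq zb; have := hq' z zq zb; rewrite ltnS leq_eqVlt => /orP[|//].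
  by rewrite -rv => /eqP /rank_inj zv; move: vq; rewrite -zv zq.
apply/orP; right; rewrite ab /=.
case/splitPr: vq pq' uq' lq hq' => p1 p2.
rewrite cat_path => /andP[pp1 /= /andP[el pp2]].
move=> /andP[anin]; rewrite cat_uniq => /and3P[u1 dis u2].
rewrite last_cat /= => lq hq'.
have vp1 : v \notin a :: p1.
  rewrite inE negb_or eq_sym av /=.
  by apply: contra dis => vin; apply/hasP; exists v => //; exact: mem_head.
have bp1 : b \notin a :: p1.
  rewrite inE negb_or eq_sym ab /=.
  apply: contra dis => bin; apply/hasP; exists b => //.
  by rewrite -lq; apply: mem_last.
apply/andP; split.
  apply: (IH hk' a v (rcons p1 v) (ltnW ha)) => //.
  - by rewrite rv.
  - by rewrite rcons_path pp1.
  - by rewrite last_rcons.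
  move=> z; rewrite mem_rcons inE => /orP[/eqP -> |zp]; first by rewrite eqxx.
  move=> _; have zb : z != b by apply: contraNneq bp1 => <-; rewrite inE zp orbT.
  have := hq' z; rewrite mem_cat zp => /(_ isT zb); rewrite ltnS leq_eqVlt => /orP[|//].
  by rewrite -rv => /eqP /rank_inj zv; move: vp1; rewrite -zv inE zp orbT.
apply: (IH hk' v b p2 _ (ltnW hb)) => //.
- by rewrite rv.
- by rewrite eq_sym.
move=> z zp zb; have := hq' z; rewrite mem_cat inE zp !orbT => /(_ isT zb).
rewrite ltnS leq_eqVlt => /orP[|//].
rewrite -rv => /eqP /rank_inj zv; move: u2; rewrite /= -zv zp //.
Qed.

Lemma Gstar_path a b q : a != b -> path e a q -> last a q = b ->
  (forall z, z \in q -> z != b -> (rank pi z < rank pi a)%N /\ (rank pi z < rank pi b)%N) ->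
  Gstar e pi a b.
Proof.
move=> ab pq lq hq; apply/existsP.
have kl : (minn (rank pi a) (rank pi b) < #|T|)%N.
  by rewrite gtn_min rank_lt.
exists (Ordinal kl) => /=.
apply: (@core_path _ (ltnW kl) a b q _ _ ab pq lq); rewrite ?geq_minl ?geq_minr //.
by move=> z zq zb; have [h1 h2] := hq z zq zb; rewrite leq_min h1 h2.
Qed.

End Ranks.

Section Cust.
Variables (T : finType) (R : realFieldType) (e : rel T) (w : T -> T -> R).
Variables (pi : 'I_#|T| -> T) (ord : seq (T * T)).
Hypothesis pib : bijective pi.
Hypothesis esym : forall x y, e x y = e y x.
Hypothesis eirr : forall x, ~~ e x x.
Hypothesis wsym : forall x y, w x y = w y x.

Definition ole (a b : option R) : bool :=
  match a, b with
  | _, None => true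
  | None, Some _ => false
  | Some x, Some y => x <= y
  end.

Lemma ole_refl (a : option R) : ole a a.
Proof. by case: a => //= x. Qed.

Lemma ole_trans (a b c : option R) : ole a b -> ole b c -> ole a c.
Proof.
by case: a; case: b; case: c => //= x y z; apply: le_trans.
Qed.

Lemma omin_le_l (a b : option R) : ole (omin a b) a.
Proof. by case: a; case: b => //= x y; rewrite ge_min lexx. Qed.
Lemma omin_le_r (a b : option R) : ole (omin a b) b.
Proof. by case: a; case: b => //= x y; rewrite ge_min lexx orbT. Qed.

Lemma foldr_omin_base (b : option R) L : ole (foldr (@omin R) b L) b.
Proof.
elim: L => [|c L IH] /=; first exact: ole_refl.
exact: ole_trans (omin_le_r _ _) IH.
Qed.

Lemma foldr_omin_mem (b : option R) L a : a \in L -> ole (foldr (@omin R) b L) a.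
Proof.
elim: L => [|c L IH] //=; rewrite inE => /orP[/eqP ->|aL].
  exact: omin_le_l.
exact: ole_trans (omin_le_r _ _) (IH aL).
Qed.

Lemma omin_cases (a b : option R) : omin a b = a \/ omin a b = b.
Proof.
case: a; case: b => /=; auto => x y.
rewrite /Num.min; case: ifP; auto.
Qed.

Lemma foldr_omin_some (b : option R) L d : foldr (@omin R) b L = Some d -> b = Some d \/ Some d \in L.
Proof.
elim: L => [|c L IH] /=; first by left.
case: (omin_cases c (foldr (@omin R) b L)) => ->.
  by move=> ->; right; exact: mem_head.
by move=> /IH [->|h]; [left|right; rewrite inE h orbT].
Qed.

Definition symm (m : T -> T -> option R) := forall a b, m a b = m b a.

Notation proc := (@process_edge T R e pi).

Lemma proc_sym m o : symm m -> symm (proc m o).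
Proof.
move=> ms a b; case: o => x y /=.
rewrite [(b == x) && _]andbC [(b == y) && _]andbC orbC.
by case: ifP.
Qed.

Lemma proc_mono m o a b : symm m -> ole (proc m o a b) (m a b).
Proof.
move=> ms; case: o => x y /=.
case: ifP => [/orP[/andP[/eqP -> /eqP ->]|/andP[/eqP -> /eqP ->]]|_].
- exact: foldr_omin_base.
- rewrite ms; exact: foldr_omin_base.
- exact: ole_refl.
Qed.

Lemma proc_other m o a b : ~~ ((o == (a, b)) || (o == (b, a))) -> proc m o a b = m a b.
Proof.
case: o => x y /=; rewrite !xpair_eqE => h.
case: ifP => // /orP[/andP[/eqP ax /eqP bx]|/andP[/eqP ay /eqP bx]].
  by move: h; rewrite ax bx !eqxx.
by move: h; rewrite ay bx !eqxx orbT.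
Qed.

Lemma fold_sym l m : symm m -> symm (foldl proc m l).
Proof. elim: l m => [|o l IH] m ms //=; apply: IH; exact: proc_sym. Qed.

Lemma fold_mono l m a b : symm m -> ole (foldl proc m l a b) (m a b).
Proof.
elim: l m => [|o l IH] m ms /=; first exact: ole_refl.
exact: ole_trans (IH _ (proc_sym m o ms)) (proc_mono m o a b ms).
Qed.

Definition edgeP (a b : T) := fun uv : T * T => (uv == (a, b)) || (uv == (b, a)).

Lemma fold_frozen l m a b : count (edgeP a b) l = 0%N -> foldl proc m l a b = m a b.
Proof.
elim: l m => [|o l IH] m //= /eqP; rewrite addn_eq0 => /andP[h1 /eqP h2].
rewrite IH // proc_other //; move: h1; rewrite /edgeP; by case: (_ || _).
Qed.

Lemma proc_step m o x y z : symm m -> (o = (x, y) \/ o = (y, x)) ->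
  (rank pi z < rank pi x)%N -> (rank pi z < rank pi y)%N ->
  Gstar e pi x z -> Gstar e pi z y ->
  ole (proc m o x y) (oadd (m x z) (m z y)).
Proof.
move=> ms [->|->] zx zy gxz gzy /=; rewrite !eqxx /= ?orbT.
  apply: foldr_omin_mem; apply/mapP; exists z => //.
  by rewrite mem_filter zx zy gxz gzy mem_enum.
have -> : oadd (m x z) (m z y) = oadd (m y z) (m z x).
  by rewrite [m y z]ms [m z x]ms; case: (m x z); case: (m z y) => //= a b; rewrite addrC.
apply: foldr_omin_mem; apply/mapP; exists z => //.
rewrite mem_filter zx zy mem_enum Gstar_sym // gzy Gstar_sym // gxz //.
Qed.

Definition lowwalk a b d :=
  exists q, [/\ path e a q, last a q = b, wlen w a q = d &
    forall z, z \in q -> z != b -> (rank pi z < rank pi a)%N /\ (rank pi z < rank pi b)%N].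

Definition Inv (m : T -> T -> option R) :=
  symm m /\ forall a b d, m a b = Some d -> lowwalk a b d.

Lemma Inv_m0 : Inv (m0 e w).
Proof.
split.
  by move=> a b; rewrite /m0 esym wsym.
move=> a b d; rewrite /m0; case: ifP => // eab [<-].
exists [:: b]; split => //=; first by rewrite eab.
  by rewrite wlen_cons wlen_nil addr0.
by move=> z; rewrite inE => ->.
Qed.

Lemma lowwalk_cat a z b d1 d2 : (rank pi z < rank pi a)%N -> (rank pi z < rank pi b)%N ->
  lowwalk a z d1 -> lowwalk z b d2 -> lowwalk a b (d1 + d2).
Proof.
move=> za zb [q1 [p1 l1 w1 h1]] [q2 [p2 l2 w2 h2]].
exists (q1 ++ q2); split.
- by rewrite cat_path p1 l1 p2.
- by rewrite last_cat l1.
- by rewrite wlen_cat w1 l1 w2.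
move=> u; rewrite mem_cat => /orP[uq|uq] ub.
  case: (u =P z) => [->|/eqP uz]; first by [].
  have [h h'] := h1 u uq uz; split => //; exact: ltn_trans h' zb.
case: (h2 u uq ub) => h h'; split => //; exact: ltn_trans h za.
Qed.

Lemma proc_Inv m o : Inv m -> Inv (proc m o).
Proof.
move=> [ms mw]; split; first exact: proc_sym.
move=> a b d; case: o => x y /=.
set L := [seq _ | _ <- _].
case: ifP => [hab|_]; last exact: mw.
move/foldr_omin_some => [hw|].
  case/orP: hab => /andP[/eqP -> /eqP ->]; first exact: mw.
  by apply: mw; rewrite ms.
case/mapP => z; rewrite mem_filter => /andP[/and4P[zx zy gxz gzy] _].
case Exz: (m x z) => [d1|] //; case Ezy: (m z y) => [d2|] //= [->].
case/orP: hab => /andP[/eqP -> /eqP ->].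
  exact: (lowwalk_cat _ _ _ _ _ zx zy (mw _ _ _ Exz) (mw _ _ _ Ezy)).
rewrite addrC; apply: (lowwalk_cat _ _ _ _ _ zy zx); apply: mw.
  by rewrite ms.
by rewrite ms.
Qed.

Lemma fold_Inv l m : Inv m -> Inv (foldl proc m l).
Proof. elim: l m => [|o l IH] m mi //=; apply: IH; exact: proc_Inv. Qed.

Definition mC := customize e w pi ord.

Lemma Inv_mC : Inv mC.
Proof. exact: fold_Inv Inv_m0. Qed.


Hypothesis wpos : forall x y, e x y -> 0 < w x y.
Hypothesis vord : valid_edge_order e pi ord.

Let rneq := @rank_neq T pi pib.
Let rinj := @rank_inj T pi pib.
Let gpath := @Gstar_path T pi pib e.
Let gsym := @Gstar_sym T pi e esym.
Let gneq := @Gstar_neq T pi e eirr.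
Let wge0 := @wlen_ge0 T R e w wpos.

Lemma other_edge x y a b (o : T * T) : (o = (x, y) \/ o = (y, x)) -> a != x -> a != y ->
  ~~ ((o == (a, b)) || (o == (b, a))).
Proof.
move=> oxy ax ay; case: oxy => ->; rewrite !xpair_eqE ![_ == a]eq_sym (negbTE ax) (negbTE ay) /=;
  by rewrite !andbF.
Qed.

Lemma ole_oadd (a a' b b' : option R) : ole a a' -> ole b b' -> ole (oadd a b) (oadd a' b').
Proof.
by case: a; case: a'; case: b; case: b' => //= ? ? ? ?; apply: lerD.
Qed.

Lemma split_count1 (P : pred (T * T)) l : count P l = 1%N ->
  exists l1 o l2, [/\ l = l1 ++ o :: l2, P o, count P l1 = 0%N & count P l2 = 0%N].
Proof.
elim: l => [|o l IH] //=; case Po: (P o) => /=.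
  by move=> [h]; exists [::], o, l.
rewrite add0n => /IH [l1 [o' [l2 [-> Po' c1 c2]]]].
by exists (o :: l1), o', l2; rewrite /= Po c1.
Qed.

Lemma split_walk (z : T) q : z \in q -> exists p1 p2, q = rcons p1 z ++ p2.
Proof. by case/splitPr => p1 p2; exists p1, p2; rewrite cat_rcons. Qed.

Lemma upper n : forall x y q, (size q <= n)%N -> path e x q -> last x q = y ->
  uniq (x :: q) -> x != y ->
  (forall z, z \in q -> z != y -> (rank pi z < rank pi x)%N /\ (rank pi z < rank pi y)%N) ->
  ole (mC x y) (Some (wlen w x q)).
Proof.
have [ms0 _] := Inv_m0.
elim: n => [|n IH] x y q hs pq lq uq xy hq.
  by move: hs; rewrite leqn0 => /nilP qn; move: lq xy; rewrite qn /= => ->; rewrite eqxx.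
pose A : pred T := fun u => (u \in q) && (u != y).
case: (pickP A) => [u0 Au0|A0].
  case: (arg_maxnP (rank pi) Au0) => z /andP[zq zy] zmax.
  have [p1 [p2 qE]] := split_walk z q zq.
  move: pq lq uq hq hs; rewrite qE.
  rewrite cat_path last_cat last_rcons => /andP[pp1 pp2] lq uq hq hs.
  have uq1 : uniq (x :: rcons p1 z) by move: uq; rewrite -cat_cons cat_uniq => /and3P[].
  have uq2 : uniq (z :: p2).
    by move: uq; rewrite cat_rcons -cat_cons cat_uniq => /and3P[].
  have dis : ~~ has (mem (x :: rcons p1 z)) p2.
    by move: uq; rewrite -cat_cons cat_uniq => /and3P[].
  have yp2 : y \in p2.
    by have := mem_last z p2; rewrite lq inE => /orP[/eqP yz|//]; move: zy; rewrite yz eqxx.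
  have ynp1 : y \notin x :: rcons p1 z.
    by apply: contra dis => yin; apply/hasP; exists y.
  have xz : x != z.
    by move: uq1; rewrite /= mem_rcons inE negb_or => /andP[/andP[]].
  have zq' : z \in rcons p1 z ++ p2 by rewrite mem_cat mem_rcons mem_head.
  have [zrx zry] := hq z zq' zy.
  have int1 : forall u, u \in rcons p1 z -> u != z ->
      (rank pi u < rank pi x)%N /\ (rank pi u < rank pi z)%N.
    move=> u uin uz.
    have uy : u != y by apply: contraNneq ynp1 => <-; rewrite inE uin orbT.
    have Au : A u by rewrite /A /= uy qE mem_cat uin.
    have ltu : (rank pi u < rank pi z)%N by rewrite ltn_neqAle rneq //; exact: (zmax u Au).
    by split => //; apply: ltn_trans ltu zrx.
  have int2 : forall u, u \in p2 -> u != y ->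
      (rank pi u < rank pi z)%N /\ (rank pi u < rank pi y)%N.
    move=> u uin uy.
    have Au : A u by rewrite /A /= uy qE mem_cat uin orbT.
    have uz : u != z by apply: contraTneq uin => ->; move: uq2 => /= /andP[].
    have ltu : (rank pi u < rank pi z)%N by rewrite ltn_neqAle rneq //; exact: (zmax u Au).
    have uq' : u \in rcons p1 z ++ p2 by rewrite mem_cat uin orbT.
    by split => //; case: (hq u uq' uy).
  have p2n : p2 != [::] by apply/eqP => p2e; move: yp2; rewrite p2e.
  rewrite size_cat size_rcons in hs.
  have IH1 := IH x z (rcons p1 z).
  have {IH1} IH1 : ole (mC x z) (Some (wlen w x (rcons p1 z))).
    have sp2 : (0 < size p2)%N by rewrite lt0n size_eq0.
    apply: IH1 => //; first by rewrite size_rcons -ltnS (leq_trans _ hs) // -[X in (X < _)%N]addn0 ltn_add2l.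
    by rewrite last_rcons.
  have {IH} IH2 : ole (mC z y) (Some (wlen w z p2)).
    apply: IH => //.
      by rewrite -ltnS (leq_trans _ hs) // addSn ltnS leq_addl.
  have gxy : Gstar e pi x y.
    apply: (gpath x y (rcons p1 z ++ p2)) => //.
      by rewrite cat_path last_rcons pp1.
    by rewrite last_cat last_rcons.
  have gxz : Gstar e pi x z.
    apply: (gpath x z (rcons p1 z)) => //; first by rewrite last_rcons.
  have gzy : Gstar e pi z y.
    apply: (gpath z y p2) => //; exact: zy.
  have [_ cnt srt] := vord.
  have [l1 [o [l2 [ordE Po c1 c2]]]] := split_count1 _ _ (cnt x y gxy).
  have oxy : o = (x, y) \/ o = (y, x) by case/orP: Po => /eqP; auto.
  have lo : low_rank pi o = minn (rank pi x) (rank pi y).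
    by case: oxy => ->; rewrite /low_rank //= minnC.
  have tr : transitive (fun p q : T * T => (low_rank pi p <= low_rank pi q)%N).
    by move=> b a c; apply: leq_trans.
  have all2 : all (fun r => (low_rank pi o <= low_rank pi r)%N) l2.
    by move: srt; rewrite ordE sorted_cat_cons => /andP[_ /(order_path_min tr)].
  have c0 : forall u v, (minn (rank pi u) (rank pi v) < minn (rank pi x) (rank pi y))%N ->
      count (edgeP u v) l2 = 0%N.
    move=> u v h; apply/eqP; rewrite -leqn0 leqNgt -has_count; apply/hasPn => r rin.
    apply/negP => /orP[] /eqP re; move/allP: all2 => /(_ r rin);
      by rewrite lo re /low_rank /= ?[minn (rank pi v) _]minnC leqNgt h.
  have zmin : (rank pi z < minn (rank pi x) (rank pi y))%N by rewrite leq_min zrx zry.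
  set M1 := foldl proc (m0 e w) l1.
  have ms1 : symm M1 := fold_sym l1 _ ms0.
  have emC : mC = foldl proc (proc M1 o) l2 by rewrite /mC /customize ordE foldl_cat.
  have hxz : mC x z = M1 x z.
    rewrite emC fold_frozen; last by apply: c0; rewrite (minn_idPr (ltnW zrx)).
    have zx : z != x by rewrite eq_sym.
    by rewrite proc_other // orbC; apply: (other_edge _ _ _ _ _ oxy zx zy).
  have hzy : mC z y = M1 z y.
    rewrite emC fold_frozen; last by apply: c0; rewrite (minn_idPl (ltnW zry)).
    have zx : z != x by rewrite eq_sym.
    by rewrite proc_other //; apply: (other_edge _ _ _ _ _ oxy zx zy).
  have step := proc_step M1 o x y z ms1 oxy zrx zry gxz gzy.
  have mono : ole (mC x y) (proc M1 o x y).
    by rewrite emC; apply: fold_mono; apply: proc_sym.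
  rewrite wlen_cat last_rcons; apply: (ole_trans _ _ _ mono (ole_trans _ _ _ step _)).
  rewrite -hxz -hzy.
  by apply: (@ole_oadd _ (Some _) _ (Some _)).
move: (erefl q); case: {2}q => [|c q'] qe.
  by move: lq xy; rewrite qe /= => ->; rewrite eqxx.
have cy : c = y.
  have := A0 c; rewrite /A qe mem_head /=; by move/negbFE/eqP.
move: pq; rewrite qe /= cy => /andP[exy pq'].
apply: (ole_trans _ _ _ (fold_mono ord (m0 e w) x y ms0)).
rewrite /m0 exy /= wlen_cons lerDl; exact: wge0.
Qed.

Variable dist : T -> T -> R.
Hypothesis hdist : forall s t, is_dist e w s t (dist s t).
Hypothesis huniq : forall a b, exists! p : seq T,
       [/\ path e a p, last a p = b & wlen w a p = dist a b].

Lemma good u h q : path e u q -> last u q = h -> u != h -> uniq (u :: q) ->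
  wlen w u q = dist u h ->
  (forall z, z \in q -> z != h -> (rank pi z < rank pi u)%N /\ (rank pi z < rank pi h)%N) ->
  Gstar e pi u h && (mC u h == Some (dist u h)).
Proof.
move=> pq lq uh uq wq hq.
rewrite (gpath u h q) //=.
have := upper (size q) u h q (leqnn _) pq lq uq uh hq; rewrite wq.
case E: (mC u h) => [d|] //= dle.
have [q' [pq' lq' wq' _]] := Inv_mC.2 u h d E.
have := (hdist u h).2 q' pq' lq'; rewrite wq' => led.
by apply/eqP; congr Some; apply/le_anti; rewrite dle led.
Qed.

Lemma seg s a b c : path e s (a ++ b ++ c) ->
  wlen w s (a ++ b ++ c) = dist s (last s (a ++ b ++ c)) ->
  wlen w (last s a) b = dist (last s a) (last (last s a) b).
Proof.
move=> pp wp; set u := last s a; set u' := last u b.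
apply/le_anti/andP; split; last first.
  apply: (hdist u u').2 => //.
  by move: pp; rewrite cat_path cat_path => /and3P[].
have [W [pW lW wW]] := (hdist u u').1.
move: pp; rewrite !cat_path -/u -/u' => /and3P[pa pb pc].
have := (hdist s (last s (a ++ b ++ c))).2 (a ++ W ++ c).
rewrite !cat_path pa -/u pW lW pc => /(_ isT).
rewrite !last_cat -/u lW -/u' => /(_ erefl).
move: wp; rewrite !last_cat -/u -/u' => wp.
rewrite -wp !wlen_cat -/u lW wW -/u'.
by rewrite lerD2l lerD2r.
Qed.

Lemma mlen_cons (m : T -> T -> option R) x y p :
  mlen m x (y :: p) = oadd (m x y) (mlen m y p).
Proof. by []. Qed.

Lemma mlen_cat (m : T -> T -> option R) x p1 p2 :
  mlen m x (p1 ++ p2) = oadd (mlen m x p1) (mlen m (last x p1) p2).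
Proof.
elim: p1 x => [|y p1 IH] x.
  rewrite cat0s [mlen m x [::]]/=; by case: (mlen m x p2) => //= d; rewrite add0r.
rewrite cat_cons !mlen_cons IH /=.
by case: (m x y) => // a; case: (mlen m y p1) => // b; case: (mlen _ _ _) => //= c; rewrite addrA.
Qed.


Lemma split_walk' (a u : T) q : u \in a :: q -> exists q1 q2, q = q1 ++ q2 /\ last a q1 = u.
Proof.
rewrite inE => /orP[/eqP ->|uq]; first by exists [::], q.
have [p1 [p2 ->]] := split_walk u q uq.
by exists (rcons p1 u), p2; rewrite last_rcons.
Qed.

Definition upr : rel T := fun x y =>
  [&& Gstar e pi x y, mC x y == Some (dist x y) & (rank pi x < rank pi y)%N].
Definition dnr : rel T := fun x y =>
  [&& Gstar e pi x y, mC x y == Some (dist x y) & (rank pi y < rank pi x)%N].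

Lemma up n : forall a q, (size q <= n)%N -> path e a q -> uniq (a :: q) ->
  wlen w a q = dist a (last a q) ->
  (forall z, z \in a :: q -> z != last a q -> (rank pi z < rank pi (last a q))%N) ->
  exists p, [/\ path upr a p, last a p = last a q, {subset p <= q} &
                mlen mC a p = Some (dist a (last a q))].
Proof.
elim: n => [|n IH] a q hs pq uq wq hq.
  move: hs; rewrite leqn0 => /nilP qe; subst q; exists [::]; split => //.
  by rewrite -wq wlen_nil.
case qe0: q => [|c0 q0].
  by subst q; exists [::]; split => //; rewrite -wq wlen_nil.
have qn : q != [::] by rewrite qe0.
rewrite -qe0.
set h := last a q in wq hq *.
have hq' : h \in q by rewrite /h qe0 /= mem_last.
have ah : a != h by apply: contraTneq hq' => <-; move: uq => /= /andP[].
pose A : pred T := fun u => (u \in a :: q) && (u != h).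
have Aa : A a by rewrite /A mem_head ah.
case: (arg_maxnP (rank pi) Aa) => u /andP[uin uh] umax.
have [q1 [q2 [qE lu]]] := split_walk' a u q uin.
have uq' := uq; rewrite qE -cat_cons cat_uniq in uq'; case/and3P: uq' => uq1 dis uq2.
have hl : h = last u q2 by rewrite /h qE last_cat lu.
have q2n : q2 != [::] by apply/eqP => q2e; move: uh; rewrite hl q2e eqxx.
have hq2 : h \in q2 by rewrite hl; case: (q2) q2n => // c r _ /=; exact: mem_last.
have ud : u \notin q2 by apply: contra dis => uq2'; apply/hasP; exists u => //; rewrite -lu mem_last.
have uqu : uniq (u :: q2) by rewrite /= ud uq2.
move: pq; rewrite qE cat_path lu => /andP[pq1 pq2].
have [wq1 wq2] : wlen w a q1 = dist a u /\ wlen w u q2 = dist u h.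
  have pP : path e a ([::] ++ q1 ++ q2) by rewrite /= cat_path lu pq1.
  have wP : wlen w a ([::] ++ q1 ++ q2) = dist a (last a ([::] ++ q1 ++ q2)).
    by rewrite /= -qE.
  split; first by have := seg a [::] q1 q2 pP wP; rewrite /= lu.
  have pP' : path e a (q1 ++ q2 ++ [::]) by rewrite cats0 cat_path lu pq1.
  have wP' : wlen w a (q1 ++ q2 ++ [::]) = dist a (last a (q1 ++ q2 ++ [::])).
    by rewrite cats0 -qE.
  by have := seg a q1 q2 [::] pP' wP'; rewrite lu -hl.
have ruh : (rank pi u < rank pi h)%N by apply: hq.
have gd : upr u h.
  have lq2 : last u q2 = h by rewrite hl.
  rewrite /upr ruh andbT; apply: (good u h q2) => //.
  move=> z zq2 zh; split; last by apply: hq => //; rewrite qE inE mem_cat zq2 !orbT.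
  have Az : A z by rewrite /A zh qE inE mem_cat zq2 !orbT.
  rewrite ltn_neqAle rneq; last by apply: contraTneq zq2 => ->.
  exact: umax.
have sz : (size q1 <= n)%N.
  move: hs; rewrite qE size_cat; case: (q2) q2n => // c r _; rewrite /= addnS ltnS.
  by apply: leq_trans; apply: leq_addr.
have wq1' : wlen w a q1 = dist a (last a q1) by rewrite lu.
have hmax1 : forall z, z \in a :: q1 -> z != last a q1 -> (rank pi z < rank pi (last a q1))%N.
  rewrite lu => z zin zu.
  have zh : z != h by apply: contraTneq zin => ->; apply: contra dis => hin; apply/hasP; exists h.
  have Az : A z by rewrite /A zh qE -cat_cons mem_cat zin.
  by rewrite ltn_neqAle rneq //; exact: umax.
have [p' [pp' lp' sp' mp']] := IH a q1 sz pq1 uq1 wq1' hmax1.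
rewrite lu in lp' mp'.
exists (rcons p' h); split.
- by rewrite rcons_path pp' lp' gd.
- by rewrite last_rcons.
- move=> z; rewrite mem_rcons inE => /orP[/eqP ->|zp].
    by rewrite mem_cat hq2 orbT.
  by rewrite mem_cat sp'.
- rewrite -cats1 mlen_cat mp' lp' mlen_cons /=.
  move: gd => /and3P[_ /eqP -> _] /=.
  by rewrite addr0 -wq1 -wq2 -wq qE wlen_cat lu.
Qed.

Lemma down n : forall h q, (size q <= n)%N -> path e h q -> uniq (h :: q) ->
  wlen w h q = dist h (last h q) ->
  (forall z, z \in q -> (rank pi z < rank pi h)%N) ->
  exists p, [/\ path dnr h p, last h p = last h q, {subset p <= q} &
                mlen mC h p = Some (dist h (last h q))].
Proof.
elim: n => [|n IH] h q hs pq uq wq hq.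
  move: hs; rewrite leqn0 => /nilP qe; subst q; exists [::]; split => //.
  by rewrite -wq wlen_nil.
case qe0: q => [|c0 q0].
  by subst q; exists [::]; split => //; rewrite -wq wlen_nil.
rewrite -qe0.
set t := last h q in wq *.
have Ac : c0 \in q by rewrite qe0 mem_head.
pose A : pred T := fun u => u \in q.
case: (@arg_maxnP _ c0 A (rank pi) Ac) => u uin umax.
have [p1 [p2 qE]] := split_walk u q uin.
have uq' := uq; rewrite qE cat_rcons -cat_cons cat_uniq in uq'; case/and3P: uq' => uq1 dis uq2.
have uq1' : uniq (h :: rcons p1 u) by move: uq; rewrite qE -cat_cons cat_uniq => /and3P[].
have hu : h != u by apply: contraTneq uin => <-; move: uq => /= /andP[].
move: pq; rewrite qE cat_path last_rcons => /andP[pq1 pq2].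
have tl : t = last u p2 by rewrite /t qE last_cat last_rcons.
have [wq1 wq2] : wlen w h (rcons p1 u) = dist h u /\ wlen w u p2 = dist u t.
  have pP : path e h ([::] ++ rcons p1 u ++ p2) by rewrite /= cat_path last_rcons pq1.
  have wP : wlen w h ([::] ++ rcons p1 u ++ p2) = dist h (last h ([::] ++ rcons p1 u ++ p2)).
    by rewrite /= -qE.
  split; first by have := seg h [::] (rcons p1 u) p2 pP wP; rewrite /= last_rcons.
  have pP' : path e h (rcons p1 u ++ p2 ++ [::]) by rewrite cats0 cat_path last_rcons pq1.
  have wP' : wlen w h (rcons p1 u ++ p2 ++ [::]) = dist h (last h (rcons p1 u ++ p2 ++ [::])).
    by rewrite cats0 -qE.
  by have := seg h (rcons p1 u) p2 [::] pP' wP'; rewrite last_rcons -tl.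
have rhu : (rank pi u < rank pi h)%N by apply: hq.
have unp2 : u \notin p2 by move: uq2 => /= /andP[].
have gd : dnr h u.
  rewrite /dnr rhu andbT; apply: (good h u (rcons p1 u)) => //; first by rewrite last_rcons.
  move=> z zq1 zu; split; first by apply: hq; rewrite qE mem_cat zq1.
  rewrite ltn_neqAle rneq //; apply: umax; by rewrite /A qE mem_cat zq1.
have sz : (size p2 <= n)%N.
  by move: hs; rewrite qE size_cat size_rcons addSn ltnS; apply: leq_trans; apply: leq_addl.
have wq2' : wlen w u p2 = dist u (last u p2) by rewrite -tl.
have hmax2 : forall z, z \in p2 -> (rank pi z < rank pi u)%N.
  move=> z zp2; have zu : z != u by apply: contraTneq zp2 => ->.
  rewrite ltn_neqAle rneq //; apply: umax; by rewrite /A qE mem_cat zp2 orbT.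
have [p' [pp' lp' sp' mp']] := IH u p2 sz pq2 uq2 wq2' hmax2.
rewrite -tl in lp' mp'.
exists (u :: p'); split.
- by rewrite /= gd pp'.
- by rewrite /= lp'.
- move=> z; rewrite inE => /orP[/eqP ->|zp].
    by rewrite mem_cat mem_rcons mem_head.
  by rewrite mem_cat sp' ?orbT.
- rewrite mlen_cons mp'; move: gd => /and3P[_ /eqP -> _] /=.
  by rewrite -wq1 -wq2 -wq qE wlen_cat last_rcons.
Qed.

Lemma expand x p L : uniq (x :: p) -> mlen mC x p = Some L ->
  exists q, [/\ path e x q, last x q = last x p, wlen w x q = L & {subset p <= q}].
Proof.
elim: p x L => [|v p IH] x L.
  by move=> _ [<-]; exists [::]; split => //; rewrite wlen_nil.
move=> uq; rewrite mlen_cons.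
case E1: (mC x v) => [d1|] //; case E2: (mlen mC v p) => [d2|] //= [<-].
have xv : x != v by move: uq; rewrite /= inE negb_or => /andP[/andP[]].
have uq' : uniq (v :: p) by move: uq => /= /andP[].
have [q1 [pq1 lq1 wq1 _]] := Inv_mC.2 x v d1 E1.
have [q2 [pq2 lq2 wq2 sq2]] := IH v d2 uq' E2.
exists (q1 ++ q2); split.
- by rewrite cat_path pq1 lq1.
- by rewrite last_cat lq1 lq2.
- by rewrite wlen_cat wq1 lq1 wq2.
move=> z; rewrite inE => /orP[/eqP ->|zp]; last by rewrite mem_cat sq2 ?orbT.
have := mem_last x q1; rewrite lq1 inE eq_sym (negbTE xv) /=.
by rewrite mem_cat => ->.
Qed.

Lemma path_zip (r : rel T) s p x y : path r s p -> (x, y) \in zip (s :: p) p -> r x y.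
Proof.
elim: p s => [|v p IH] s //= /andP[rsv pp]; rewrite inE => /orP[/eqP [-> ->] //|].
exact: IH.
Qed.

Lemma drop_last (x : T) p r : drop (size p) (x :: p ++ r) = last x p :: r.
Proof. by elim: p x => [|y p IH] x //=; rewrite IH. Qed.

Lemma partii x y : Gstar e pi x y -> mC x y = Some (dist x y) ->
  up_down e pi x [:: y] /\ mlen mC x [:: y] = Some (dist x y) /\
  (forall p, up_down e pi x p -> last x p = y -> mlen mC x p = Some (dist x y) -> p = [:: y]).
Proof.
move=> gxy Exy; have xy := gneq _ _ gxy.
split.
  split; first by rewrite /= gxy.
    by rewrite /= inE xy.
  case: (ltnP (rank pi x) (rank pi y)) => h.
    by exists 1%N; rewrite /= h.
  exists 0%N; split => //=; rewrite andbT ltn_neqAle h andbT.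
  by rewrite rneq // eq_sym.
split; first by rewrite mlen_cons Exy /= addr0.
move=> p [pp up [j [s1 s2]]] lp mp.
have [Q [pQ lQ wQ sQ]] := expand x p _ up mp.
have [Q2 [pQ2 lQ2 wQ2 iQ2]] := Inv_mC.2 x y _ Exy.
case: (huniq x y) => P [_ uP].
have QQ2 : Q = Q2.
  by rewrite -(uP Q) ?(uP Q2) //; split => //; rewrite lQ lp.
clear mp lQ; case: p pp up s1 s2 lp sQ => [|v p'] pp up s1 s2 lp sQ.
  by move: xy; rewrite -lp /= eqxx.
case: p' pp up s1 s2 lp sQ => [|c r] pp up s1 s2 lp sQ; first by rewrite /= in lp; rewrite lp.
exfalso.
have yin : y \in c :: r by rewrite -lp /= mem_last.
have vy : v != y.
  by apply: contraTneq yin => <-; move: up => /= /andP[_ /andP[vn _]].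
have vQ2 : v \in Q2 by rewrite -QQ2 sQ // mem_head.
have [rvx rvy] := iQ2 v vQ2 vy.
case: j s1 s2 => [|j] s1 s2.
  have pv : path (fun a b : T => (rank pi b < rank pi a)%N) v (c :: r) :=
    @path_sorted _ _ x (v :: c :: r) s2.
  have trg : transitive (fun a b : T => (rank pi b < rank pi a)%N).
    by move=> b a c' h1 h2; apply: ltn_trans h2 h1.
  have := order_path_min trg pv; move/allP => /(_ y yin).
  by rewrite ltnNge (ltnW rvy).
by move: s1 => /= /andP[]; rewrite ltnNge (ltnW rvx).
Qed.

Lemma parti s t : exists p, [/\ up_down e pi s p, last s p = t,
   (forall x y, (x, y) \in zip (s :: p) p -> mC x y = Some (dist x y)) &
   mlen mC s p = Some (dist s t)].
Proof.
case: (huniq s t) => P [[pP lP wP] _].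
have uP : uniq (s :: P).
  apply/negP => /negP nu; have [q [pq lq wq]] := @nonuniq_shorter T R e w wpos P s pP nu.
  have := (hdist s t).2 q pq; rewrite lq lP => /(_ erefl) h.
  by move: (le_lt_trans h wq); rewrite wP ltxx.
pose A : pred T := fun u => u \in s :: P.
have As : A s by rewrite /A mem_head.
case: (@arg_maxnP _ s A (rank pi) As) => h hin hmax.
have [q1 [q2 [PE lh]]] := split_walk' s h P hin.
have uP' := uP; rewrite PE -cat_cons cat_uniq in uP'; case/and3P: uP' => uq1 dis uq2.
have hq2 : h \notin q2 by apply: contra dis => hq; apply/hasP; exists h => //; rewrite -lh mem_last.
move: pP; rewrite PE cat_path lh => /andP[pq1 pq2].
have tl : t = last h q2 by rewrite -lP PE last_cat lh.
have [wq1 wq2] : wlen w s q1 = dist s h /\ wlen w h q2 = dist h t.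
  have pP : path e s ([::] ++ q1 ++ q2) by rewrite /= cat_path lh pq1.
  have wP' : wlen w s ([::] ++ q1 ++ q2) = dist s (last s ([::] ++ q1 ++ q2)).
    by rewrite /= -PE lP.
  split; first by have := seg s [::] q1 q2 pP wP'; rewrite /= lh.
  have pP' : path e s (q1 ++ q2 ++ [::]) by rewrite cats0 cat_path lh pq1.
  have wP'' : wlen w s (q1 ++ q2 ++ [::]) = dist s (last s (q1 ++ q2 ++ [::])).
    by rewrite cats0 -PE lP.
  by have := seg s q1 q2 [::] pP' wP''; rewrite lh -tl.
have wq1' : wlen w s q1 = dist s (last s q1) by rewrite lh.
have hmax1 : forall z, z \in s :: q1 -> z != last s q1 -> (rank pi z < rank pi (last s q1))%N.
  rewrite lh => z zin zh; rewrite ltn_neqAle rneq //; apply: hmax.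
  by rewrite /A PE -cat_cons mem_cat zin.
have [p1 [pp1 lp1 sp1 mp1]] := up (size q1) s q1 (leqnn _) pq1 uq1 wq1' hmax1.
have uhq2 : uniq (h :: q2) by rewrite /= hq2.
have wq2' : wlen w h q2 = dist h (last h q2) by rewrite -tl.
have hmax2 : forall z, z \in q2 -> (rank pi z < rank pi h)%N.
  move=> z zq; have zh : z != h by apply: contraTneq zq => ->.
  rewrite ltn_neqAle rneq //; apply: hmax.
  by rewrite /A PE -cat_cons mem_cat zq orbT.
have [p2 [pp2 lp2 sp2 mp2]] := down (size q2) h q2 (leqnn _) pq2 uhq2 wq2' hmax2.
rewrite lh in lp1 mp1; rewrite -tl in lp2 mp2.
have trl : transitive (fun a b : T => (rank pi a < rank pi b)%N) by move=> ? ? ?; apply: ltn_trans.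
have trg : transitive (fun a b : T => (rank pi b < rank pi a)%N).
  by move=> b a c' h1 h2; apply: ltn_trans h2 h1.
have sl1 : path (fun a b : T => (rank pi a < rank pi b)%N) s p1.
  by apply: sub_path pp1 => a b /and3P[].
have sl2 : path (fun a b : T => (rank pi b < rank pi a)%N) h p2.
  by apply: sub_path pp2 => a b /and3P[].
exists (p1 ++ p2); split.
- split.
  + rewrite cat_path lp1; apply/andP; split.
      by apply: sub_path pp1 => a b /and3P[].
    by apply: sub_path pp2 => a b /and3P[].
  + rewrite -cat_cons cat_uniq; apply/and3P; split.
    * by apply: (sorted_uniq trl) => //; move=> a; rewrite ltnn.
    * apply/hasPn => z zp2; apply/negP => zin.
      move/hasPn: dis => /(_ z (sp2 z zp2)); rewrite /= inE.
      move: zin; rewrite inE => /orP[->//|/sp1 ->]; by rewrite orbT.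
    * have : uniq (h :: p2) by apply: (sorted_uniq trg) => //; move=> a; rewrite ltnn.
      by case/andP.
  + exists (size p1); split.
      by rewrite /= take_size_cat.
    by rewrite drop_last lp1.
- by rewrite last_cat lp1 lp2.
- move=> x y xin; apply/eqP.
  apply: (path_zip (fun a b => mC a b == Some (dist a b)) s (p1 ++ p2) x y _ xin).
  rewrite cat_path lp1; apply/andP; split.
    by apply: sub_path pp1 => a b /and3P[].
  by apply: sub_path pp2 => a b /and3P[].
- by rewrite mlen_cat mp1 lp1 mp2 /= -wq1 -wq2 -wP PE wlen_cat lh.
Qed.

End Cust.

Theorem mainTheorem7 (T : finType) (R : realFieldType) (e : rel T)
    (w : T -> T -> R) (dist : T -> T -> R) (pi : 'I_#|T| -> T)
    (ord : seq (T * T)) :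
  simple_graph e ->
  connected e ->
  (forall x y, w x y = w y x) ->
  (forall x y, e x y -> 0 < w x y) ->
  (forall s t, is_dist e w s t (dist s t)) ->
  (forall a b, exists! p : seq T,
       [/\ path e a p, last a p = b & wlen w a p = dist a b]) ->
  bijective pi ->
  valid_edge_order e pi ord ->
  let mC := customize e w pi ord in
  let inR x y := Gstar e pi x y && (mP dist x y != mC x y) in
  (forall s t, exists p : seq T,
      [/\ up_down e pi s p, last s p = t,
          (forall x y, (x, y) \in zip (s :: p) p -> ~~ inR x y) &
          mlen mC s p = Some (dist s t)]) /\
  (forall x y, Gstar e pi x y -> ~~ inR x y ->
      up_down e pi x [:: y] /\ mlen mC x [:: y] = Some (dist x y) /\
      (forall p, up_down e pi x p -> last x p = y ->
         mlen mC x p = Some (dist x y) -> p = [:: y])).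
Proof.
move=> [esym eirr] _ wsym wpos hdist huniq pib vord mC' inR'.
split.
- move=> s t; have [p [ud lp hz mp]] := @parti _ _ _ _ _ _ pib esym wsym wpos vord _ hdist huniq s t.
  exists p; split => // x y xin.
  have hz' : mC' x y = Some (dist x y) := hz x y xin.
  by rewrite /inR' hz' /mP eqxx andbF.
- move=> x y gxy nr.
  have Exy : mC' x y = Some (dist x y).
    by move: nr; rewrite /inR' gxy /= negbK /mP => /eqP <-.
  exact: (@partii _ _ _ _ _ _ pib esym eirr wsym _ huniq x y gxy Exy).
Qed.
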